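(* (i) The set of symplectic formal power series is a subalgebra of $\mathbb{C}[[x]]$. (ii) A meromorphic function $\psi(t)$ is symplectic of order $d$ at $a\in\mathbb{C}$ if and only if there exists a formal power series $\rho(y)\in\mathbb{C}[[y]]$ such that the Laurent expansion of $\psi(t)$ at $t=a$ equals $\frac{1}{(a-t)^d}\,\rho\!\left(\frac{(a-t)^2}{1-a+t}\right)$. (iii) If $\psi_1(t)$ is symplectic at $a\in\mathbb{C}$ of order $d_1$ and $\psi_2(t)$ is symplectic at $a$ of order $d_2$, then $\psi_1(t)\psi_2(t)$ is symplectic at $a$ of order $d_1+d_2$.
   Context: A formal power series $\varphi(x)=\sum_{i\ge0}\gamma_i x^i\in\mathbb{C}[[x]]$ is called symplectic if for every $m\ge1$ one has $\sum_{k=0}^{m-1}(-1)^k\binom{m-1}{k}\gamma_{m+k}=0$. A meromorphic function $\psi(t)$ whose pole at $t=a$ has order at most $d\in\mathbb{Z}$ is called symplectic at $a$ of order $d$ if the formal power series $x^d\psi(a-x)\in\mathbb{C}[[x]]$ is symplectic. In (ii) the expression is understood as a formal Laurent series in the variable $x=a-t$, with $\frac{(a-t)^2}{1-a+t}=\frac{x^2}{1-x}$. *)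

(* Defs.v *)
From HB Require Import structures.
From mathcomp Require Import all_boot all_order all_algebra.
From mathcomp Require Import complex.
From mathcomp Require Import classical_sets fsbigop reals.
Set Implicit Arguments. Unset Strict Implicit. Unset Printing Implicit Defensive.
Import Order.TTheory GRing.Theory Num.Theory.
Local Open Scope ring_scope.

Section Defs.
Variable C : comRingType.

Definition fps := nat -> C.

Definition symplectic (g : fps) : Prop :=
  forall m : nat, (0 < m)%N ->
    \sum_(k < m) (-1) ^+ k * ('C(m.-1, k))%:R * g (m + k)%N = 0.

Definition fps_one : fps := fun n => (n == 0%N)%:R.
Definition fps_add (f g : fps) : fps := fun n => f n + g n.
Definition fps_scale (c : C) (f : fps) : fps := fun n => c * f n.
Definition fps_mul (f g : fps) : fps :=
  fun n => \sum_(i < n.+1) f i * g (n - i)%N.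
Definition fps_pow (f : fps) (k : nat) : fps := iter k (fps_mul f) fps_one.

(* Substitution rho(s(x)) of a series s with zero constant term into rho:
   the coefficient of x^n only involves powers s^k with k <= n. *)
Definition fps_comp (rho s : fps) : fps :=
  fun n => \sum_(k < n.+1) rho k * fps_pow s k n.

(* The series x^2/(1-x) = x^2 * (sum_j x^j). *)
Definition fps_x2 : fps := fun n => (n == 2%N)%:R.
Definition fps_geom : fps := fun _ => 1.
Definition fps_s : fps := fps_mul fps_x2 fps_geom.

(* Formal Laurent series in the local variable x = a - t: the Laurent
   expansion at t = a of a meromorphic germ psi is n |-> coefficient of x^n. *)
Definition laurent := int -> C.

(* Laurent expansions of meromorphic functions have finite pole order. *)
Definition laurent_germ (L : laurent) : Prop :=
  exists m : int, forall n : int, n < m -> L n = 0.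

(* psi is symplectic at a of order d: its pole at a has order at most d and
   x^d psi(a - x) in C[[x]] is symplectic. *)
Definition symplectic_at (d : int) (L : laurent) : Prop :=
  (forall n : int, n < - d -> L n = 0) /\
  symplectic (fun i : nat => L (i%:Z - d)).

Definition laurent_mul (L1 L2 : laurent) : laurent :=
  fun n => (\sum_(i \in [set: int]) L1 i * L2 (n - i))%R.

End Defs.

(* Main.v *)
Require Import Defs.
From HB Require Import structures.
From mathcomp Require Import all_boot all_order all_algebra.
From mathcomp Require Import complex.
From mathcomp Require Import classical_sets fsbigop reals.
From mathcomp Require Import zify.
Set Implicit Arguments. Unset Strict Implicit. Unset Printing Implicit Defensive.
Import Order.TTheory GRing.Theory Num.Theory.
Local Open Scope ring_scope.

Section PS.
Variable C : comRingType.
Implicit Types (f g : fps C) (p q r : {poly C}).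

Definition trunc N f : {poly C} := \poly_(i < N) f i.
Definition eqN N p q := forall i, (i < N)%N -> p`_i = q`_i.

Lemma eqN_refl N p : eqN N p p. Proof. by []. Qed.
Lemma eqN_sym N p q : eqN N p q -> eqN N q p.
Proof. by move=> H i Hi; rewrite H. Qed.
Lemma eqN_trans N p q r : eqN N p q -> eqN N q r -> eqN N p r.
Proof. by move=> H1 H2 i Hi; rewrite H1 // H2. Qed.

Lemma eqN_mull N r p q : eqN N p q -> eqN N (r * p) (r * q).
Proof.
move=> H i Hi; rewrite !coefM; apply: eq_bigr => j _; rewrite H //.
exact: leq_ltn_trans (leq_subr _ _) Hi.
Qed.

Lemma eqN_mul N p p' q q' : eqN N p p' -> eqN N q q' -> eqN N (p * q) (p' * q').
Proof.
move=> H1 H2; apply: (eqN_trans (eqN_mull p H2)).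
rewrite (mulrC p) (mulrC p'); exact: eqN_mull.
Qed.

Lemma eqN_pow N p q k : eqN N p q -> eqN N (p ^+ k) (q ^+ k).
Proof.
move=> H; elim: k => [|k IH]; first by rewrite !expr0.
by rewrite !exprS; apply: eqN_mul.
Qed.

Lemma coef_trunc N f i : (trunc N f)`_i = if (i < N)%N then f i else 0.
Proof. by rewrite coef_poly. Qed.

Lemma fps_mulE N f g n : (n < N)%N -> fps_mul f g n = (trunc N f * trunc N g)`_n.
Proof.
move=> Hn; rewrite coefM /fps_mul; apply: eq_bigr => [[j hj]] _ /=.
rewrite !coef_trunc ifT; last by apply: leq_ltn_trans Hn.
by rewrite ifT //; apply: leq_ltn_trans (leq_subr _ _) Hn.
Qed.

Lemma trunc_mul N f g : eqN N (trunc N (fps_mul f g)) (trunc N f * trunc N g).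
Proof. by move=> i Hi; rewrite coef_trunc Hi (fps_mulE _ _ Hi). Qed.

Lemma trunc_pow N f k : eqN N (trunc N (fps_pow f k)) (trunc N f ^+ k).
Proof.
elim: k => [|k IH].
  by move=> i Hi; rewrite coef_trunc Hi expr0 coef1.
change (fps_pow f k.+1) with (fps_mul f (fps_pow f k)).
apply: (eqN_trans (@trunc_mul _ _ _)); rewrite exprS; exact: eqN_mul.
Qed.

Definition S N : {poly C} := 'X^2 * trunc N (fun _ => 1).

Lemma trunc_s N : eqN N (trunc N (fps_s C)) (S N).
Proof.
rewrite /fps_s; apply: (eqN_trans (@trunc_mul _ _ _)); apply: eqN_mul => // i Hi.
by rewrite coef_trunc Hi coefXn.
Qed.

Lemma G_prop N : trunc N (fun _ => 1) * ('X - 1) = 'X^N - 1.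
Proof.
rewrite subrX1 mulrC; congr (_ * _); rewrite /trunc poly_def.
by apply: eq_bigr => i _; rewrite scale1r.
Qed.

Lemma Spow_low N k i : (i < 2 * k)%N -> ((S N) ^+ k)`_i = 0.
Proof. by move=> H; rewrite /S exprMn -exprM coefXnM H. Qed.

Lemma Spow_diag N k : (0 < N)%N -> ((S N) ^+ k)`_(2 * k) = 1.
Proof.
move=> HN; rewrite /S exprMn -exprM coefXnM ltnn subnn.
elim: k => [|k IH]; first by rewrite expr0 coef1.
by rewrite exprS coef0M IH coef_trunc HN mulr1.
Qed.

Lemma XN1 N : eqN N ('X^N - 1) (-1).
Proof. by move=> i Hi; rewrite coefB coefXn coefN coef1 (ltn_eqF Hi) sub0r. Qed.

Lemma lemmaA N m k : (0 < m)%N -> (2 * m <= N)%N ->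
  ((S N) ^+ k * ('X - 1) ^+ m.-1)`_((2 * m).-1) = 0.
Proof.
move=> Hm HN; case: (leqP m k) => Hk.
  by rewrite /S exprMn -exprM -mulrA coefXnM ifT //; lia.
have Hk' : (k <= m.-1)%N by lia.
rewrite -(subnKC Hk') exprD.
have -> : (S N)^+k * (('X-1)^+k * ('X-1)^+(m.-1-k)) =
    'X^(2*k) * (('X^N - 1)^+k * ('X-1)^+(m.-1-k)).
  by rewrite /S exprMn -exprM -G_prop exprMn !mulrA.
rewrite coefXnM ifF; last by lia.
rewrite (eqN_mul (eqN_pow k (@XN1 N)) (@eqN_refl N _)); last by lia.
rewrite -signr_odd mulr_sign -polyC1.
by case: ifP => _; rewrite ?coefN nth_default ?oppr0 // size_exp_XsubC; lia.
Qed.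
Lemma Q_expand m : ('X - 1)^+ m =
  \sum_(k < m.+1) ((-1)^+k * ('C(m,k))%:R) *: ('X^(m - k) : {poly C}).
Proof.
rewrite exprDn; apply: eq_bigr => k _.
rewrite -scalerA scaler_nat mulrC -mulrnAr.
by rewrite -mul_polyC rmorphXn rmorphN1.
Qed.

Lemma symp_coef m f N : (0 < m)%N -> (2 * m <= N)%N ->
  \sum_(k < m) (-1)^+k * ('C(m.-1,k))%:R * f (m + k)%N =
  (trunc N f * ('X - 1)^+m.-1)`_((2 * m).-1).
Proof.
case: m => // m _ HN /=; rewrite Q_expand mulr_sumr coef_sum.
apply: eq_bigr => [[k hk]] _ /=.
rewrite -scalerAr coefZ coefMXn ifF; last by lia.
rewrite coef_trunc ifT; last by lia.
congr (_ * f _); lia.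
Qed.

Lemma symplecticP f : symplectic f <-> forall m, (0 < m)%N ->
  (trunc (2 * m) f * ('X - 1)^+m.-1)`_((2 * m).-1) = 0.
Proof.
split => H m Hm; [rewrite -symp_coef // | rewrite (symp_coef _ Hm (leqnn _))]; auto.
Qed.

Definition Rp (rho : fps C) N := \sum_(k < N) rho k *: (S N)^+k.

Lemma fps_pow_s N k i : (i < N)%N -> fps_pow (fps_s C) k i = ((S N)^+k)`_i.
Proof.
move=> Hi; have := @trunc_pow N (fps_s C) k i Hi; rewrite coef_trunc Hi => ->.
exact: (eqN_pow k (@trunc_s N)) i Hi.
Qed.

Lemma sum_narrow n m (F : nat -> C) : (m <= n)%N ->
  (forall j, (m <= j)%N -> (j < n)%N -> F j = 0) ->
  \sum_(j < n) F j = \sum_(j < m) F j.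
Proof.
move=> Hmn H; rewrite [RHS](big_ord_widen n F Hmn) [RHS]big_mkcond /=.
apply: eq_bigr => [[j hj]] _ /=; case: ifP => // /negbT; rewrite -leqNgt => hm.
exact: H.
Qed.

Lemma trunc_comp rho N : eqN N (trunc N (fps_comp rho (fps_s C))) (Rp rho N).
Proof.
move=> i Hi; rewrite coef_trunc Hi /fps_comp /Rp coef_sum.
rewrite (@sum_narrow N i.+1 (fun k => (rho k *: S N ^+ k)`_i)) //; last first.
  by move=> j hj _; rewrite coefZ Spow_low ?mulr0 //; lia.
by apply: eq_bigr => k _; rewrite coefZ (fps_pow_s _ Hi).
Qed.

Lemma comp_symp rho : symplectic (fps_comp rho (fps_s C)).
Proof.
apply/symplecticP => m Hm.
rewrite (eqN_mul (@trunc_comp rho (2 * m)) (@eqN_refl (2 * m) _)); last by lia.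
rewrite /Rp mulr_suml coef_sum big1 // => k _.
by rewrite -scalerAl coefZ lemmaA ?mulr0.
Qed.

Fixpoint rl (g : fps C) (k : nat) : seq C :=
  if k is k'.+1 then rcons (rl g k')
    (g (2 * k')%N - \sum_(j < k') nth 0 (rl g k') j * fps_pow (fps_s C) j (2 * k'))
  else [::].
Definition rhoof g k := nth 0 (rl g k.+1) k.

Lemma size_rl g k : size (rl g k) = k.
Proof. by elim: k => //= k IH; rewrite size_rcons IH. Qed.

Lemma nth_rl g k j : (j < k)%N -> nth 0 (rl g k) j = rhoof g j.
Proof.
elim: k => // k IH Hj; case: (ltnP j k) => h.
  by rewrite /= nth_rcons size_rl h; exact: IH.
by have -> : j = k by lia.
Qed.

Lemma rho_rec g k : rhoof g k =
  g (2 * k)%N - \sum_(j < k) rhoof g j * fps_pow (fps_s C) j (2 * k).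
Proof.
rewrite {1}/rhoof /= nth_rcons size_rl ltnn eqxx; congr (_ - _).
by apply: eq_bigr => [[j hj]] _ /=; rewrite nth_rl.
Qed.

Lemma comp_even g k : fps_comp (rhoof g) (fps_s C) (2 * k)%N = g (2 * k)%N.
Proof.
rewrite /fps_comp (@sum_narrow _ k.+1 (fun j => rhoof g j * fps_pow (fps_s C) j (2 * k))); last first.
- by move=> j h1 h2; rewrite (@fps_pow_s (2 * k).+1) // Spow_low ?mulr0 //; lia.
- by lia.
rewrite big_ord_recr /= (@fps_pow_s (2 * k).+1) // Spow_diag // mulr1.
by rewrite [rhoof g k]rho_rec addrC subrK.
Qed.

Lemma symp_sub f g : symplectic f -> symplectic g -> symplectic (fun n => f n - g n).
Proof.
move=> Hf Hg m Hm; under eq_bigr do rewrite mulrBr.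
by rewrite sumrB (Hf m Hm) (Hg m Hm) subr0.
Qed.

Lemma symp_zero (h : fps C) : symplectic h -> (forall k, h (2 * k)%N = 0) -> forall n, h n = 0.
Proof.
move=> Hs He; elim/ltn_ind => n IH.
have E := odd_double_half n; rewrite -mul2n in E.
case Ho: (odd n) E => /= E; last by rewrite -E add0n He.
have := Hs (n./2).+1 erefl; rewrite big_ord_recr /= big1; last first.
  by move=> [k hk] _ /=; rewrite IH ?mulr0 //; lia.
have E2 : ((n./2).+1 + n./2)%N = n by lia.
rewrite E2 binn mulr1 add0r -signr_odd mulr_sign.
by case: ifP => _ // /eqP; rewrite oppr_eq0 => /eqP.
Qed.

Lemma symp_char g : symplectic g -> forall n, g n = fps_comp (rhoof g) (fps_s C) n.
Proof.
move=> Hg n; apply/eqP; rewrite -subr_eq0; apply/eqP.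
apply: (@symp_zero (fun n => g n - fps_comp (rhoof g) (fps_s C) n)).
  exact: symp_sub Hg (comp_symp _).
by move=> k; rewrite comp_even subrr.
Qed.

Lemma symp_ext f g : (forall n, f n = g n) -> symplectic f -> symplectic g.
Proof. by move=> E Hf m Hm; under eq_bigr do rewrite -E; exact: Hf. Qed.

Lemma symp_mul f g : symplectic f -> symplectic g -> symplectic (fps_mul f g).
Proof.
move=> Hf Hg; apply/symplecticP => m Hm.
have E1 : forall h, symplectic h -> eqN (2 * m) (trunc (2 * m) h) (Rp (rhoof h) (2 * m)).
  move=> h Hh; apply: eqN_trans (@trunc_comp (rhoof h) (2 * m)).
  by move=> i Hi; rewrite !coef_trunc Hi (symp_char Hh).
rewrite (eqN_mul (eqN_trans (@trunc_mul _ _ _) (eqN_mul (E1 _ Hf) (E1 _ Hg)))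
   (@eqN_refl (2 * m) _)); last by lia.
rewrite /Rp mulr_suml mulr_suml coef_sum big1 // => k _.
rewrite mulr_sumr mulr_suml coef_sum big1 // => l _.
by rewrite -scalerAl -scalerAr -scalerAl !coefZ -exprD -scalerAl coefZ lemmaA ?mulr0.
Qed.

Lemma symp_add f g : symplectic f -> symplectic g -> symplectic (fps_add f g).
Proof.
move=> Hf Hg m Hm; rewrite /fps_add; under eq_bigr do rewrite mulrDr.
by rewrite big_split /= (Hf m Hm) (Hg m Hm) addr0.
Qed.

Lemma symp_scale c f : symplectic f -> symplectic (fps_scale c f).
Proof.
move=> Hf m Hm; rewrite /fps_scale; under eq_bigr do rewrite mulrCA.
by rewrite -mulr_sumr (Hf m Hm) mulr0.
Qed.

Lemma symp_one : symplectic (fps_one C).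
Proof.
move=> m Hm; rewrite big1 // => k _; rewrite /fps_one.
have -> : ((m + k)%N == 0%N) = false by lia.
by rewrite mulr0.
Qed.

Lemma laurent_mulE d1 d2 (L1 L2 : laurent C) :
  (forall n, n < - d1 -> L1 n = 0) -> (forall n, n < - d2 -> L2 n = 0) ->
  forall n, laurent_mul L1 L2 n =
    if 0 <= n + (d1 + d2) then
      fps_mul (fun i : nat => L1 (i%:Z - d1)) (fun i : nat => L2 (i%:Z - d2))
        (absz (n + (d1 + d2)))
    else 0.
Proof.
move=> H1 H2 n; rewrite /laurent_mul; case: ifP => Hn; last first.
  rewrite fsbig1 // => i _.
  have [hi|hi] : i < - d1 \/ n - i < - d2 by lia.
    by rewrite H1 ?mul0r.
  by rewrite H2 ?mulr0.
set M := (absz (n + (d1 + d2))).+1.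
pose r := map (fun k : nat => k%:Z - d1) (iota 0 M).
rewrite -(fsbig_widen [set` r] setT); last 2 first.
- by [].
- move=> i [_ /= Hi].
  have [hi|[hi|hi]] : i < - d1 \/ n - i < - d2 \/ (- d1 <= i /\ - d2 <= n - i) by lia.
  + by rewrite H1 ?mul0r.
  + by rewrite H2 ?mulr0.
  + exfalso; apply: Hi; apply/mapP; exists (absz (i + d1)); last by lia.
    by rewrite mem_iota; lia.
rewrite (fsbig_fwiden r); last 3 first.
- by [].
- rewrite map_inj_uniq ?iota_uniq // => a b h; lia.
- by move=> x [].
rewrite big_map.
have -> : iota 0 M = index_iota 0 M by rewrite /index_iota subn0.
rewrite big_mkord /fps_mul; apply: eq_bigr => [[k hk]] _ /=.
congr (_ * L2 _); lia.
Qed.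

End PS.

Local Open Scope complex_scope.

Theorem corollary1p5 (R : realType) :
  (* (i) symplectic series form a subalgebra of C[[x]] *)
  (symplectic (fps_one R[i]) /\
   (forall f g : fps R[i], symplectic f -> symplectic g ->
      symplectic (fps_add f g) /\ symplectic (fps_mul f g)) /\
   (forall (c : R[i]) (f : fps R[i]), symplectic f -> symplectic (fps_scale c f)))
  /\
  (* (ii) characterisation via rho((a-t)^2/(1-a+t)) *)
  (forall (d : int) (L : laurent R[i]), laurent_germ L ->
     symplectic_at d L <->
     exists rho : fps R[i], forall n : int,
       L n = (if (0 <= n + d)%R then fps_comp rho (fps_s R[i]) (absz (n + d)) else 0))
  /\
  (* (iii) products *)
  (forall (d1 d2 : int) (L1 L2 : laurent R[i]),
     laurent_germ L1 -> laurent_germ L2 ->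
     symplectic_at d1 L1 -> symplectic_at d2 L2 ->
     symplectic_at (d1 + d2) (laurent_mul L1 L2)).
Proof.
split.
  split; first exact: symp_one.
  split.
    by move=> f g Hf Hg; split; [exact: symp_add | exact: symp_mul].
  by move=> c f Hf; exact: symp_scale.
split.
  move=> d L _; split.
    case=> H0 Hs; exists (rhoof (fun i : nat => L (i%:Z - d))) => n.
    case: ifP => hn.
      rewrite -(symp_char Hs); congr L; lia.
    by apply: H0; lia.
  case=> rho H; split.
    by move=> n hn; rewrite H ifF //; lia.
  apply: (symp_ext _ (comp_symp rho)) => i; rewrite H ifT; last by lia.
  congr (fps_comp rho _ _); lia.
move=> d1 d2 L1 L2 _ _ [H1 S1] [H2 S2]; split.
  by move=> n hn; rewrite (laurent_mulE H1 H2) ifF //; lia.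
apply: (symp_ext _ (symp_mul S1 S2)) => i; rewrite (laurent_mulE H1 H2) ifT; last by lia.
congr (fps_mul _ _ _); lia.
Qed.
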